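(* For every integer $i > 0$, the limit defining $d(W,\sigma^iW)$ exists if and only if the limit defining $d_0(W,\sigma^iW)$ exists, and in that case $$d(W,\sigma^i W) = \tfrac{4}{3}\, d_0(W,\sigma^i W).$$
   Context: Words are finite strings over $\{0,1\}$; $\alpha(i)$ is the $i$-th letter and $|\alpha|$ the length. Define $W_0 = 0$, $W_{m+1} = W_m W_m 1 W_m$, and let $W=W(0)W(1)\cdots$ (indexed from $0$) be the unique infinite word having every $W_m$ as an initial segment. For words $\alpha,\beta$ of equal length, the Hamming distance is $d(\alpha,\beta) = |\{i:\alpha(i)\ne\beta(i)\}|/|\alpha|$, and (if $\alpha$ contains a $0$) $d_0(\alpha,\beta) = |\{i : \alpha(i)=0,\ \beta(i)=1\}|/|\{i:\alpha(i)=0\}|$. For $i>0$ and $n\ge0$ let $\alpha_n = W(i)W(i+1)\cdots W(i+|W_n|-1)$ be the subword of $W$ of length $|W_n|$ starting at position $i$, and define $d(W,\sigma^iW) = \lim_{n\to\infty} d(W_n,\alpha_n)$ and $d_0(W,\sigma^iW) = \lim_{n\to\infty} d_0(W_n,\alpha_n)$. *)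

(* Defs.v *)
From Stdlib Require Import Reals Lra Lia Arith List.
Import ListNotations.
Open Scope R_scope.

(* Words over {0,1} are lists of nat (letters 0 and 1). *)
Fixpoint Wm (m : nat) : list nat :=
  match m with
  | O => [0%nat]
  | S k => Wm k ++ Wm k ++ [1%nat] ++ Wm k
  end.

(* The infinite word W, indexed from 0: W(k) is the k-th letter of W_k
   (|W_k| > k, and each W_m is a prefix of W_{m+1}, so W has every W_m
   as initial segment). *)
Definition W (k : nat) : nat := nth k (Wm k) 0%nat.

Definition ham_count (a b : list nat) : nat :=
  length (filter (fun p => negb (Nat.eqb (fst p) (snd p))) (combine a b)).

Definition dist (a b : list nat) : R := INR (ham_count a b) / INR (length a).

Definition zeros (a : list nat) : nat := length (filter (fun x => Nat.eqb x 0) a).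

Definition d0_count (a b : list nat) : nat :=
  length (filter (fun p => andb (Nat.eqb (fst p) 0) (Nat.eqb (snd p) 1)) (combine a b)).

Definition dist0 (a b : list nat) : R := INR (d0_count a b) / INR (zeros a).

Definition alpha (i n : nat) : list nat :=
  map (fun k => W (i + k)) (seq 0 (length (Wm n))).

Definition dseq (i : nat) (n : nat) : R := dist (Wm n) (alpha i n).
Definition d0seq (i : nat) (n : nat) : R := dist0 (Wm n) (alpha i n).

(* Main.v *)
Require Import Defs.
From Stdlib Require Import Reals Lra Lia Arith List.
Import ListNotations.
Open Scope R_scope.

Definition onesl (l : list nat) : nat := length (filter (fun x => Nat.eqb x 1) l).

Lemma Wm_len n : length (Wm (S n)) = (3 * length (Wm n) + 1)%nat.
Proof. simpl. rewrite !length_app. simpl. lia. Qed.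

Lemma Wm_zeros n : zeros (Wm (S n)) = (3 * zeros (Wm n))%nat.
Proof. unfold zeros. simpl. rewrite !filter_app, !length_app. simpl. lia. Qed.

Lemma Wm_lz n : (2 * length (Wm n) + 1 = 3 * zeros (Wm n))%nat.
Proof. induction n. reflexivity. rewrite Wm_len, Wm_zeros. lia. Qed.

Lemma Wm_len_ge n : (n < length (Wm n))%nat.
Proof. induction n. simpl; lia. rewrite Wm_len. lia. Qed.

Lemma Wm_bin n : Forall (fun x => x <= 1)%nat (Wm n).
Proof. induction n; simpl. constructor; [lia|constructor].
  repeat (apply Forall_app; split; auto). Qed.

Lemma Wm_prefix n m : (n <= m)%nat -> exists t, Wm m = Wm n ++ t.
Proof. induction 1. exists []. now rewrite app_nil_r.
  destruct IHle as [t Ht]. simpl. rewrite Ht. eexists. now rewrite <- app_assoc. Qed.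

Lemma W_nth n k : (k < length (Wm n))%nat -> W k = nth k (Wm n) 0%nat.
Proof. intros H. unfold W. destruct (Nat.le_ge_cases k n) as [h|h].
  - destruct (Wm_prefix _ _ h) as [t Ht]. rewrite Ht. rewrite app_nth1; auto. apply Wm_len_ge.
  - destruct (Wm_prefix _ _ h) as [t Ht]. rewrite Ht. rewrite app_nth1; auto. Qed.

Lemma Wm_map n : Wm n = map W (seq 0 (length (Wm n))).
Proof. apply nth_ext with (d := 0%nat) (d' := W 0).
  - now rewrite length_map, length_seq.
  - intros k Hk. rewrite map_nth, seq_nth by auto. simpl. symmetry; now apply W_nth. Qed.

Lemma W_bin k : (W k <= 1)%nat.
Proof. rewrite (W_nth k k) by apply Wm_len_ge. 
  pose proof (Wm_bin k) as F. rewrite Forall_forall in F. apply F, nth_In, Wm_len_ge. Qed.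

Lemma shift_map (f : nat -> nat) i L s : map (fun k => f (i + k)%nat) (seq s L) = map f (seq (i + s) L).
Proof. revert s; induction L; intros s; simpl; auto. rewrite IHL, Nat.add_succ_r. reflexivity. Qed.

Lemma onesl_app a b : onesl (a ++ b) = (onesl a + onesl b)%nat.
Proof. unfold onesl. now rewrite filter_app, length_app. Qed.

Lemma onesl_le l : (onesl l <= length l)%nat.
Proof. apply filter_length_le. Qed.

Lemma ones_shift i L : (onesl (map W (seq i L)) <= onesl (map W (seq 0 L)) + i /\
   onesl (map W (seq 0 L)) <= onesl (map W (seq i L)) + i)%nat.
Proof.
  pose proof (seq_app i L 0) as E1. pose proof (seq_app L i 0) as E2.
  simpl in E1, E2. rewrite Nat.add_comm in E2. rewrite E2 in E1.
  apply (f_equal (fun l => onesl (map W l))) in E1. rewrite !map_app, !onesl_app in E1.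
  pose proof (onesl_le (map W (seq 0 i))). pose proof (onesl_le (map W (seq L i))).
  rewrite length_map, length_seq in *. lia. Qed.

Lemma ham_eq a b : length a = length b -> Forall (fun x => x <= 1)%nat a -> Forall (fun x => x <= 1)%nat b ->
  (ham_count a b + onesl b = 2 * d0_count a b + onesl a)%nat.
Proof.
  revert b; induction a as [|x a IH]; intros [|y b] Hl Fa Fb; simpl in *; try lia.
  inversion Fa as [|? ? Hx Fa2]; inversion Fb as [|? ? Hy Fb2]; subst. specialize (IH b ltac:(lia) Fa2 Fb2).
  unfold ham_count, d0_count, onesl in *. simpl.
  destruct x as [|[|x]]; destruct y as [|[|y]]; simpl; try lia. Qed.

Lemma d0_le a b : (d0_count a b <= zeros a)%nat.
Proof.
  revert b; induction a as [|x a IH]; intros [|y b]; unfold d0_count, zeros in *; simpl; try apply Nat.le_0_l.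
  specialize (IH b). destruct (Nat.eqb x 0), (Nat.eqb y 1); simpl; lia. Qed.

Lemma alpha_map i n : alpha i n = map W (seq i (length (Wm n))).
Proof. unfold alpha. rewrite (shift_map W i). now rewrite Nat.add_0_r. Qed.

Lemma real_bound (H C Z L OA OB I N : R) :
  H + OB = 2 * C + OA -> OB - OA <= I -> OA - OB <= I -> 0 <= C -> C <= Z ->
  2 * L + 1 = 3 * Z -> N + 1 <= L -> 0 <= N -> 0 <= I ->
  Rabs (H / L - 4 / 3 * (C / Z)) <= (I + 1) / (N + 1).
Proof.
  intros h1 h2 h3 h4 h5 h6 h7 h8 h9.
  assert (HL : 0 < L) by lra. assert (HZ : 0 < Z) by lra.
  assert (E : H / L - 4/3 * (C / Z) = (H - 2*C)/L + 2*C/(L*(2*L+1))).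
  { replace Z with ((2*L+1)/3) by lra. field. lra. }
  rewrite E.
  assert (A1 : Rabs ((H - 2*C)/L) <= I / L).
  { unfold Rdiv. rewrite Rabs_mult, Rabs_inv, (Rabs_pos_eq L) by lra.
    apply Rmult_le_compat_r. left; apply Rinv_0_lt_compat; lra. apply Rabs_le; lra. }
  assert (A2 : Rabs (2*C/(L*(2*L+1))) <= 1 / L).
  { rewrite Rabs_pos_eq. apply Rmult_le_reg_r with (L*(2*L+1)). nra.
    replace (2*C/(L*(2*L+1)) * (L*(2*L+1))) with (2*C) by (field; nra).
    replace (1/L * (L*(2*L+1))) with (2*L+1) by (field; lra). lra. apply Rmult_le_pos. lra. left; apply Rinv_0_lt_compat; nra. }
  eapply Rle_trans. apply Rabs_triang.
  assert (I / L + 1 / L <= (I+1)/(N+1)).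
  { replace (I/L + 1/L) with ((I+1)/L) by (field; lra).
    apply Rmult_le_compat_l. lra. apply Rinv_le_contravar; lra. }
  lra.
Qed.

Lemma seq_bound i n : Rabs (dseq i n - 4/3 * d0seq i n) <= (INR i + 1) / (INR n + 1).
Proof.
  unfold dseq, d0seq, dist, dist0.
  pose proof (ham_eq (Wm n) (alpha i n)) as He.
  assert (Hlen : length (Wm n) = length (alpha i n)) by (unfold alpha; now rewrite length_map, length_seq).
  specialize (He Hlen (Wm_bin n)).
  assert (Fb : Forall (fun x => x <= 1)%nat (alpha i n)).
  { unfold alpha. apply Forall_forall. intros x Hx. apply in_map_iff in Hx. destruct Hx as [k [<- _]]. apply W_bin. }
  specialize (He Fb).
  pose proof (ones_shift i (length (Wm n))) as Ho. rewrite <- alpha_map, <- Wm_map in Ho.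
  pose proof (d0_le (Wm n) (alpha i n)). pose proof (Wm_lz n). pose proof (Wm_len_ge n).
  apply real_bound with (OA := INR (onesl (Wm n))) (OB := INR (onesl (alpha i n))).
  - rewrite <- plus_INR, He, plus_INR, mult_INR; simpl; lra.
  - destruct Ho as [Ho _]. apply le_INR in Ho. rewrite plus_INR in Ho. lra.
  - destruct Ho as [_ Ho]. apply le_INR in Ho. rewrite plus_INR in Ho. lra.
  - apply pos_INR.
  - now apply le_INR.
  - apply (f_equal INR) in H0. rewrite plus_INR, !mult_INR in H0. simpl in H0. lra.
  - rewrite <- S_INR. apply le_INR. lia.
  - apply pos_INR.
  - apply pos_INR.
Qed.

Lemma e_cv i : Un_cv (fun n => dseq i n - 4/3 * d0seq i n) 0.
Proof.
  intros eps He.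
  destruct (archimed ((INR i + 1) / eps)) as [Ha _].
  assert (Hp : 0 <= IZR (up ((INR i + 1) / eps))).
  { assert (0 < (INR i + 1)/eps). { apply Rdiv_lt_0_compat; [pose proof (pos_INR i); lra| lra]. } lra. }
  destruct (IZN (up ((INR i + 1) / eps))) as [N HN]. { apply le_IZR. lra. }
  exists N. intros n Hn. unfold R_dist. rewrite Rminus_0_r.
  eapply Rle_lt_trans. apply seq_bound.
  rewrite HN, <- INR_IZR_INZ in Ha. apply le_INR in Hn.
  pose proof (pos_INR i). pose proof (pos_INR n).
  assert (Hb : INR i + 1 < INR N * eps).
  { apply Rmult_lt_compat_r with (r := eps) in Ha; [|lra].
    unfold Rdiv in Ha. rewrite Rmult_assoc, Rinv_l in Ha by lra. lra. }
  apply Rmult_lt_reg_r with (INR n + 1). lra.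
  unfold Rdiv. rewrite Rmult_assoc, Rinv_l by lra. rewrite Rmult_1_r.
  nra.
Qed.

Lemma cv_const (c : R) : Un_cv (fun _ => c) c.
Proof. intros eps He. exists 0%nat. intros. unfold R_dist. rewrite Rminus_diag, Rabs_R0. lra. Qed.

Theorem lemma3 (i : nat) (hi : (0 < i)%nat) :
  ((exists l, Un_cv (dseq i) l) <-> (exists l0, Un_cv (d0seq i) l0)) /\
  (forall l l0, Un_cv (dseq i) l -> Un_cv (d0seq i) l0 -> l = 4 / 3 * l0).
Proof.
  pose proof (e_cv i) as He.
  assert (F1 : forall l0, Un_cv (d0seq i) l0 -> Un_cv (dseq i) (4/3 * l0)).
  { intros l0 H. pose proof (CV_plus _ _ _ _ He (CV_mult _ _ _ _ (cv_const (4/3)) H)) as K.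
    replace (4/3*l0) with (0 + 4/3*l0) by ring.
    intros eps Hp. destruct (K eps Hp) as [N HN]. exists N. intros n Hn.
    specialize (HN n Hn). simpl in HN. replace (dseq i n) with (dseq i n - 4/3 * d0seq i n + 4/3 * d0seq i n) by ring. exact HN. }
  split; [split|].
  - intros [l H]. exists (3/4 * l).
    pose proof (CV_mult _ _ _ _ (cv_const (3/4)) (CV_minus _ _ _ _ H He)) as K.
    intros eps Hp. destruct (K eps Hp) as [N HN]. exists N. intros n Hn.
    specialize (HN n Hn). simpl in HN.
    replace (3/4*l) with (3/4*(l-0)) by ring.
    replace (d0seq i n) with (3/4 * (dseq i n - (dseq i n - 4/3 * d0seq i n))) by field. exact HN.
  - intros [l0 H]. exists (4/3*l0). now apply F1.
  - intros l l0 H1 H2. apply (UL_sequence (dseq i)); auto.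
Qed.
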